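(* Let $\mathscr T$ be a triangulation of $\Pi$ with $\mathscr T_{ijk}^{rst}\subseteq\mathscr T$ for some distinct $i,j,k\in[4]$ and $r,s,t\in\{-N,\dots,N\}$. Let $\mathscr T'$ be the result of a flip on $\mathscr T$ supported on a circuit $(X^+,X^-)$ of $\Pi$ with $X\neq X_{ijk}^{rst}$. Then $\mathscr T_{ijk}^{rst}\subseteq\mathscr T'$.
   Context: General conventions. For a finite point set $A\subset\mathbb R^d$: a cell is a subset of $A$; a simplex is an affinely independent cell; a face of a cell $C$ is a subset $F\subseteq C$ which is the set of minimizers on $C$ of some linear functional. A triangulation of $A$ is a collection $\mathscr T$ of simplices of $A$, closed under taking faces, such that for all $\sigma,\sigma'\in\mathscr T$, $\mathrm{conv}(\sigma)\cap\mathrm{conv}(\sigma')=\mathrm{conv}(F)$ for a common face $F$ of $\sigma$ and $\sigma'$, and such that $\bigcup_{\sigma\in\mathscr T}\mathrm{conv}(\sigma)=\mathrm{conv}(A)$. A circuit is a minimal affinely dependent subset $X$; it satisfies an affine dependence $\sum_{x\in X}\lambda_x x=0$, $\sum\lambda_x=0$, all $\lambda_x\neq0$, unique up to scaling, which partitions $X=X^+\cup X^-$ into the points with positive and with negative coefficients; writing $X=(X^+,X^-)$ fixes a choice of sign. Set $\mathscr T_X^+:=\{\sigma\subseteq X:X^+\not\subseteq\sigma\}$ and $\mathscr T_X^-:=\{\sigma\subseteq X:X^-\not\subseteq\sigma\}$. For $C\in\mathscr T$, $\mathrm{link}_{\mathscr T}(C):=\{C'\in\mathscr T: C\cap C'=\emptyset,\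 C\cup C'\in\mathscr T\}$. A triangulation $\mathscr T$ of $A$ has a flip supported on the circuit $(X^+,X^-)$, $X\subseteq A$, if $\mathscr T_X^+\subseteq\mathscr T$ and all inclusion-maximal elements of $\mathscr T_X^+$ have the same link $\mathscr L$ in $\mathscr T$; the result of the flip is the triangulation $(\mathscr T\setminus\{\rho\cup\sigma:\rho\in\mathscr L,\sigma\in\mathscr T_X^+\})\cup\{\rho\cup\sigma:\rho\in\mathscr L,\sigma\in\mathscr T_X^-\}$. The point set $\Pi$. Let $N\ge1$ and let $e_1,\dots,e_4$ be the standard basis of $\mathbb R^4$. For distinct $i,j\in[4]$ and integers $-N\le r\le N$ introduce symbols $f_{ij}^r$ with the identification $f_{ij}^r=f_{ji}^{-r}$; the distinct symbols $\{f_{ij}^r\}_{1\le i<j\le4,\,-N\le r\le N}$ form the standard basis of $\mathbb R^{6(2N+1)}$. Set $\Pi:=\bigcup_{1\le i<j\le4}\bigcup_{-N\le r\le N}\{(e_i,f_{ij}^r),(e_j,f_{ij}^r)\}$. For distinct $i,j,k\in[4]$ and $r,s,t\in\{-N,\dots,N\}$, $X_{ijk}^{rst}=((X_{ijk}^{rst})^+,(X_{ijk}^{rst})^-)$ is the circuit of $\Pi$ with affine dependence $(e_i,f_{ij}^r)-(e_j,f_{ij}^r)+(e_j,f_{jk}^s)-(e_k,f_{jk}^s)+(e_k,f_{ki}^t)-(e_i,f_{ki}^t)=0$, with $+$ and $-$ parts read off from these signs, and $\mathscr T_{ijk}^{rst}:=\mathscr T^+_{X_{ijk}^{rst}}$.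 *)

(* Defs.v *)
From HB Require Import structures.
From mathcomp Require Import all_boot all_order all_algebra.
Set Implicit Arguments. Unset Strict Implicit. Unset Printing Implicit Defensive.
Import Order.TTheory GRing.Theory Num.Theory.
Local Open Scope ring_scope.

(* General notions for a finite point set A = image of p : P -> R^C,  *)
(* P a finite index type of points, C a finite type of coordinates    *)

Definition lin (R : realFieldType) (C : finType) (w v : C -> R) : R :=
  \sum_(c : C) w c * v c.

Definition affine_dependence (R : realFieldType) (P C : finType)
  (p : P -> C -> R) (S : {set P}) (lam : P -> R) : Prop :=
  [/\ forall a, a \notin S -> lam a = 0,
      \sum_(a : P) lam a = 0 &
      forall c : C, \sum_(a : P) lam a * p a c = 0].

Definition aff_dep (R : realFieldType) (P C : finType)
  (p : P -> C -> R) (S : {set P}) : Prop :=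
  exists lam, affine_dependence p S lam /\ exists a, lam a != 0.

Definition is_simplex (R : realFieldType) (P C : finType)
  (p : P -> C -> R) (S : {set P}) : Prop := ~ aff_dep p S.

Definition in_conv (R : realFieldType) (P C : finType)
  (p : P -> C -> R) (S : {set P}) (x : C -> R) : Prop :=
  exists lam : P -> R,
    [/\ forall a, a \notin S -> lam a = 0,
        forall a, 0 <= lam a,
        \sum_(a : P) lam a = 1 &
        forall c : C, \sum_(a : P) lam a * p a c = x c].

Definition is_face (R : realFieldType) (P C : finType)
  (p : P -> C -> R) (F Cl : {set P}) : Prop :=
  F \subset Cl /\
  (F = set0 \/
   exists w : C -> R,
     F = [set a in Cl | [forall b in Cl, lin w (p a) <= lin w (p b)]]).

Definition is_triangulation (R : realFieldType) (P C : finType)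
  (p : P -> C -> R) (T : {set {set P}}) : Prop :=
  [/\ forall s, s \in T -> is_simplex p s,
      forall s F, s \in T -> is_face p F s -> F \in T,
      forall s s', s \in T -> s' \in T ->
        exists F, [/\ is_face p F s, is_face p F s' &
          forall x, (in_conv p s x /\ in_conv p s' x) <-> in_conv p F x] &
      forall x, in_conv p [set: P] x <-> exists2 s, s \in T & in_conv p s x].

Definition is_circuit (R : realFieldType) (P C : finType)
  (p : P -> C -> R) (X : {set P}) : Prop :=
  aff_dep p X /\ forall Y : {set P}, Y \proper X -> ~ aff_dep p Y.

Definition signed_circuit (R : realFieldType) (P C : finType)
  (p : P -> C -> R) (Xp Xm : {set P}) : Prop :=
  is_circuit p (Xp :|: Xm) /\
  exists lam, [/\ affine_dependence p (Xp :|: Xm) lam,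
                  forall a, a \in Xp -> 0 < lam a &
                  forall a, a \in Xm -> lam a < 0].

(* T_X^+ for X = (Xp, Xm); T_X^- is TX Xm Xp *)
Definition TX (P : finType) (Xp Xm : {set P}) : {set {set P}} :=
  [set s : {set P} | (s \subset Xp :|: Xm) && ~~ (Xp \subset s)].

Definition link (P : finType) (T : {set {set P}}) (Cl : {set P})
  : {set {set P}} :=
  [set C' in T | [disjoint Cl & C'] && (Cl :|: C' \in T)].

Definition maximal_in (P : finType) (S : {set {set P}}) (s : {set P}) : Prop :=
  s \in S /\ forall t, t \in S -> s \subset t -> t = s.

Definition flip_result (P : finType) (T : {set {set P}}) (Xp Xm : {set P})
  (L : {set {set P}}) : {set {set P}} :=
  (T :\: [set rho :|: s | rho in L, s in TX Xp Xm])
  :|: [set rho :|: s | rho in L, s in TX Xm Xp].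

Definition is_flip (R : realFieldType) (P C : finType) (p : P -> C -> R)
  (T : {set {set P}}) (Xp Xm : {set P}) (T' : {set {set P}}) : Prop :=
  [/\ signed_circuit p Xp Xm,
      TX Xp Xm \subset T &
      exists L, (forall s, maximal_in (TX Xp Xm) s -> link T s = L) /\
                T' = flip_result T Xp Xm L].

(* The point set Pi.  r in {-N..N} is encoded by r' : 'I_(2N+1) with   *)
(* r = r' - N; negation r |-> -r is rev_ord.                           *)
(* A point (a, b, r) with a != b denotes (e_a, f_{ab}^r); since        *)
(* f_{ab}^r = f_{ba}^{-r}, these are exactly the points of Pi, each    *)
(* once.  Coordinates: inl k = e_k coordinate, inr (i,j,r) with i < j  *)
(* = coordinate of the basis vector f_{ij}^r.                          *)

Definition PiPt (N : nat) : finType :=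
  {x : 'I_4 * 'I_4 * 'I_(2 * N).+1 | x.1.1 != x.1.2}.

Definition PiCoord (N : nat) : finType :=
  ('I_4 + {x : 'I_4 * 'I_4 * 'I_(2 * N).+1 | (x.1.1 < x.1.2)%N})%type.

Definition pi_pt (R : realFieldType) (N : nat) (x : PiPt N) : PiCoord N -> R :=
  let: (a, b, r) := val x in
  fun c => match c with
           | inl k => ((k == a) : nat)%:R
           | inr y => ((val y == (a, b, r)) || (val y == (b, a, rev_ord r)) : nat)%:R
           end.

Definition Xijk_plus (N : nat) (i j k : 'I_4) (r s t : 'I_(2 * N).+1)
  : {set PiPt N} :=
  [set x : PiPt N | val x \in [:: (i, j, r); (j, k, s); (k, i, t)]].

Definition Xijk_minus (N : nat) (i j k : 'I_4) (r s t : 'I_(2 * N).+1)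
  : {set PiPt N} :=
  [set x : PiPt N |
    val x \in [:: (j, i, rev_ord r); (k, j, rev_ord s); (i, k, rev_ord t)]].

Definition Tijk (N : nat) (i j k : 'I_4) (r s t : 'I_(2 * N).+1)
  : {set {set PiPt N}} :=
  TX (Xijk_plus i j k r s t) (Xijk_minus i j k r s t).

(* Main.v *)
Require Import Defs.
From HB Require Import structures.
From mathcomp Require Import all_boot all_order all_algebra.
From mathcomp Require Import lra.
Import Order.TTheory GRing.Theory Num.Theory.
Set Implicit Arguments. Unset Strict Implicit. Unset Printing Implicit Defensive.
Local Open Scope ring_scope.

Lemma sum_two (R : realFieldType) (P : finType) (F : P -> R) u v :
  u != v -> (forall z, z != u -> z != v -> F z = 0) ->
  \sum_z F z = F u + F v.
Proof.
move=> Huv H; rewrite (bigD1 u) //= (bigD1 v) /=; last by rewrite eq_sym.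
by rewrite big1 ?addr0 // => z /andP [Hzu Hzv]; apply: H.
Qed.

Definition swp (N : nat) (u : 'I_4 * 'I_4 * 'I_(2 * N).+1) :=
  (u.1.2, u.1.1, rev_ord u.2).

Lemma swpK N : involutive (@swp N).
Proof. by case=> [[a b] r]; rewrite /swp /= rev_ordK. Qed.

Lemma pi_inl (R : realFieldType) N (z : PiPt N) c :
  @pi_pt R N z (inl c) = ((c == (val z).1.1) : nat)%:R.
Proof. by case: z => [[[a b] r] h]. Qed.

Lemma pi_inr (R : realFieldType) N (z : PiPt N) y :
  @pi_pt R N z (inr y) =
  (nat_of_bool ((val z == val y :> 'I_4 * 'I_4 * 'I_(2 * N).+1) || (val z == swp (val y))))%:R.
Proof.
case: z => [[[a b] r] h]; rewrite /pi_pt /=.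
have -> : (val y == (b, a, rev_ord r)) = ((a, b, r) == swp (val y)).
  by rewrite -(can_eq (@swpK N)) /swp /= rev_ordK eq_sym.
by rewrite eq_sym.
Qed.

Definition coords_ok (R : realFieldType) N (lam : PiPt N -> R) :=
  forall c, \sum_(a : PiPt N) lam a * @pi_pt R N a c = 0.

Lemma swp_neq N (x : PiPt N) : swp (val x) != val x.
Proof.
case: x => [[[a b] r] h] /=; apply/negP => /eqP [E _ _].
by rewrite E eqxx in h.
Qed.

Lemma coord_sum (R : realFieldType) N (lam : PiPt N -> R) :
  coords_ok lam -> forall (y : {x : 'I_4 * 'I_4 * 'I_(2 * N).+1 | (x.1.1 < x.1.2)%N}) (x x' : PiPt N),
  val x = val y -> val x' = swp (val y) -> lam x + lam x' = 0.
Proof.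
move=> Hc y x x' Hx Hx'.
have Hxx : x != x'.
  apply/negP => /eqP E; move: (swp_neq x); by rewrite {2}E Hx' Hx eqxx.
have := Hc (inr y); rewrite (sum_two (u:=x) (v:=x') Hxx).
  by rewrite !pi_inr Hx eqxx Hx' eqxx orbT /= !mulr1.
move=> z Hzx Hzx'; rewrite pi_inr.
have -> : (val z == val y) = false.
  by apply/negbTE; rewrite -Hx; apply: contra Hzx => /eqP /val_inj ->.
have -> : (val z == swp (val y)) = false.
  by apply/negbTE; rewrite -Hx'; apply: contra Hzx' => /eqP /val_inj ->.
by rewrite mulr0.
Qed.

Lemma partner (R : realFieldType) N (lam : PiPt N -> R) :
  coords_ok lam -> forall (x x' : PiPt N),
  val x' = swp (val x) -> lam x' = - lam x.
Proof.
move=> Hc x x' Hx'; apply/eqP; rewrite -addr_eq0 addrC; apply/eqP.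
case: x Hx' => [[[a b] r] h] /= Hx'.
case: (ltngtP a b) => Hab.
- exact: (coord_sum Hc (y := exist _ (a, b, r) Hab)).
- rewrite addrC; apply: (coord_sum Hc (y := exist _ (b, a, rev_ord r) Hab)) => //=.
  by rewrite /swp /= rev_ordK.
- by exfalso; move: (h) => /=; rewrite (val_inj Hab) eqxx.
Qed.

Definition Yall N (i j k : 'I_4) (r s t : 'I_(2 * N).+1) :=
  Xijk_plus i j k r s t :|: Xijk_minus i j k r s t.

Lemma inY N (i j k : 'I_4) (r s t : 'I_(2 * N).+1) (z : PiPt N) :
  (z \in Yall i j k r s t) =
  [|| val z == (i, j, r), val z == (j, k, s), val z == (k, i, t),
      val z == (j, i, rev_ord r), val z == (k, j, rev_ord s) |
      val z == (i, k, rev_ord t)].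
Proof. by rewrite /Yall !inE -!orbA. Qed.

Lemma vertex (R : realFieldType) N (lam : PiPt N -> R) :
  coords_ok lam -> forall (i j k : 'I_4) (r s t : 'I_(2 * N).+1),
  i != j -> j != k -> i != k ->
  (forall z, z \notin Yall i j k r s t -> lam z = 0) ->
  forall u v : PiPt N, val u = (i, j, r) -> val v = (i, k, rev_ord t) ->
  lam u + lam v = 0.
Proof.
move=> Hc i j k r s t Hij Hjk Hik Hsupp u v Hu Hv.
have Huv : u != v.
  apply/negP => /eqP E; move: Hv; rewrite -E Hu => -[] /eqP.
  by rewrite (negbTE Hjk).
have := Hc (inl i); rewrite (sum_two (u:=u) (v:=v) Huv).
  by rewrite !pi_inl Hu Hv /= eqxx !mulr1.
move=> z Hzu Hzv; case: (boolP (z \in Yall i j k r s t)) => Hz;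
  last by rewrite Hsupp // mul0r.
rewrite pi_inl; move: Hz; rewrite inY.
case/orP => [/eqP E|]; first by move: Hzu; rewrite (val_inj (etrans E (esym Hu))) eqxx.
case/orP => [/eqP E|]; first by rewrite E /= (negbTE Hij) mulr0.
case/orP => [/eqP E|]; first by rewrite E /= (negbTE Hik) mulr0.
case/orP => [/eqP E|]; first by rewrite E /= (negbTE Hij) mulr0.
case/orP => [/eqP E|]; first by rewrite E /= (negbTE Hik) mulr0.
move=> /eqP E; by move: Hzv; rewrite (val_inj (etrans E (esym Hv))) eqxx.
Qed.

Lemma Yrot N (i j k : 'I_4) (r s t : 'I_(2 * N).+1) :
  Yall j k i s t r = Yall i j k r s t.
Proof.
apply/setP => z; rewrite !inY.
by do ! case: (_ == _).
Qed.

Lemma swp_ok N (z : PiPt N) : (swp (val z)).1.1 != (swp (val z)).1.2.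
Proof. by rewrite /swp /= eq_sym (valP z). Qed.

Definition pswp N (z : PiPt N) : PiPt N := exist _ (swp (val z)) (swp_ok z).

Lemma key (R : realFieldType) N (i j k : 'I_4) (r s t : 'I_(2 * N).+1)
  (Xp Xm : {set PiPt N}) (lam : PiPt N -> R) :
  i != j -> j != k -> i != k ->
  is_circuit (@pi_pt R N) (Xp :|: Xm) ->
  affine_dependence (@pi_pt R N) (Xp :|: Xm) lam ->
  (forall a, a \in Xp -> 0 < lam a) -> (forall a, a \in Xm -> lam a < 0) ->
  Xm \subset Yall i j k r s t -> Xp :|: Xm = Yall i j k r s t.
Proof.
move=> Hij Hjk Hik [[lam0 [[H0out _ _] [a Ha]]] _] [Hout _ Hcoord] Hp Hm HmY.
have Hc : coords_ok lam := Hcoord.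
have Hnz : forall z, z \in Xp :|: Xm -> lam z != 0.
  move=> z; rewrite in_setU => /orP [/Hp | /Hm] H; [by rewrite gt_eqF | by rewrite lt_eqF].
have HaX : a \in Xp :|: Xm.
  by apply/negPn/negP => /H0out E; rewrite E eqxx in Ha.
have Yswp : forall z z' : PiPt N, z \in Yall i j k r s t ->
    val z' = swp (val z) -> z' \in Yall i j k r s t.
  move=> z z'; rewrite !inY => Hz ->; move: Hz.
  by do ! (case/orP; [move/eqP ->; rewrite /swp /= ?rev_ordK !eqxx /= ?orbT //|]);
    move/eqP ->; rewrite /swp /= ?rev_ordK !eqxx /= ?orbT.
have XY : Xp :|: Xm \subset Yall i j k r s t.
  apply/subsetP => z; rewrite in_setU => /orP [Hz|Hz]; last exact: (subsetP HmY).
  have E := partner Hc (x:=z) (x':=pswp z) erefl.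
  have Hz' : pswp z \in Xm.
    have : pswp z \in Xp :|: Xm.
      apply/negPn/negP => /Hout; rewrite E => /eqP; rewrite oppr_eq0 => /eqP E0.
      by have := Hp z Hz; rewrite E0 ltxx.
    rewrite in_setU => /orP [H|//]; have := Hp _ H; rewrite E oppr_gt0 => H'.
    by move: (Hp z Hz); rewrite ltNge (ltW H').
  by apply: (Yswp _ _ (subsetP HmY _ Hz')); rewrite /= swpK.
have Hsupp : forall z, z \notin Yall i j k r s t -> lam z = 0.
  by move=> z HzY; apply: Hout; apply: contra HzY; apply: (subsetP XY).
have Hki : k != i by rewrite eq_sym.
have Hji : j != i by rewrite eq_sym.
have Hkj : k != j by rewrite eq_sym.
pose P1 : PiPt N := exist _ (i, j, r) Hij.
pose P2 : PiPt N := exist _ (j, k, s) Hjk.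
pose P3 : PiPt N := exist _ (k, i, t) Hki.
pose P4 : PiPt N := exist _ (j, i, rev_ord r) Hji.
pose P5 : PiPt N := exist _ (k, j, rev_ord s) Hkj.
pose P6 : PiPt N := exist _ (i, k, rev_ord t) Hik.
have E4 : lam P4 = - lam P1 := partner Hc (x:=P1) (x':=P4) erefl.
have E5 : lam P5 = - lam P2 := partner Hc (x:=P2) (x':=P5) erefl.
have E6 : lam P6 = - lam P3 := partner Hc (x:=P3) (x':=P6) erefl.
have Vi : lam P1 + lam P6 = 0 :=
  vertex Hc Hij Hjk Hik Hsupp (u:=P1) (v:=P6) erefl erefl.
have Vj : lam P2 + lam P4 = 0.
  apply: (vertex Hc Hjk Hki Hji (r:=s) (s:=t) (t:=r)) => //.
  by rewrite Yrot.
have Vk : lam P3 + lam P5 = 0.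
  apply: (vertex Hc Hki Hij Hkj (r:=t) (s:=r) (t:=s)) => //.
  by rewrite Yrot Yrot.
have HY : forall z, z \in Yall i j k r s t -> lam z = lam P1 \/ lam z = - lam P1.
  move=> z; rewrite inY.
  case/orP => [/eqP E|]; first by (have -> : z = P1 by apply: val_inj); left; lra.
  case/orP => [/eqP E|]; first by (have -> : z = P2 by apply: val_inj); left; lra.
  case/orP => [/eqP E|]; first by (have -> : z = P3 by apply: val_inj); left; lra.
  case/orP => [/eqP E|]; first by (have -> : z = P4 by apply: val_inj); right; lra.
  case/orP => [/eqP E|]; first by (have -> : z = P5 by apply: val_inj); right; lra.
  by move=> /eqP E; (have -> : z = P6 by apply: val_inj); right; lra.
have Ha0 : lam P1 != 0.
  have := Hnz a HaX; case: (HY a (subsetP XY _ HaX)) => ->;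
    by rewrite ?oppr_eq0.
apply/eqP; rewrite eqEsubset XY /=; apply/subsetP => z HzY.
apply/negPn/negP => /Hout E.
by case: (HY z HzY); rewrite E => /eqP; rewrite eq_sym ?oppr_eq0 (negbTE Ha0).
Qed.

Unset Implicit Arguments.

Theorem proposition4p6 (R : realFieldType) (N : nat) (HN : (0 < N)%N)
  (T T' : {set {set PiPt N}}) (i j k : 'I_4) (r s t : 'I_(2 * N).+1)
  (Xp Xm : {set PiPt N}) :
  i != j -> j != k -> i != k ->
  is_triangulation (@pi_pt R N) T ->
  Tijk i j k r s t \subset T ->
  is_flip (@pi_pt R N) T Xp Xm T' ->
  Xp :|: Xm != Xijk_plus i j k r s t :|: Xijk_minus i j k r s t ->
  Tijk i j k r s t \subset T'.
Proof.
move=> Hij Hjk Hik _ Hsub [[Hcirc [lam [Hdep Hpos Hneg]]] _ [L [_ ->]]] HneqX.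
apply/subsetP => s0 Hs0.
rewrite /flip_result in_setU in_setD.
case: (boolP (s0 \in [set rho :|: s1 | rho in L, s1 in TX Xp Xm])) => HA /=;
  last by rewrite (subsetP Hsub _ Hs0).
move/imset2P: HA => [rho s1 Hrho Hs1 E].
case: (boolP (Xm \subset s1)) => Hm.
  exfalso; move/negP: HneqX; apply; apply/eqP.
  apply: (key Hij Hjk Hik Hcirc Hdep Hpos Hneg).
  apply: (subset_trans Hm); apply: (subset_trans (subsetUr rho s1)).
  rewrite -E; move: Hs0; rewrite /Tijk /TX inE => /andP [H _]; exact: H.
rewrite E; apply/imset2P; exists rho s1 => //.
move: Hs1; rewrite /TX !inE setUC => /andP [-> _] /=; exact: Hm.
Qed.
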